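(* Let $\mathcal{X}$ be a finite set, $\pi$ a probability mass function on $\mathcal{X}$ with $\pi(x)>0$ for all $x$, and let a group $\mathcal{G}$ act on $\mathcal{X}$, with orbits $\mathcal{O}(x)=\{gx:g\in\mathcal{G}\}$. Let $G$, $M$, $B$ be the Gibbs, Metropolis–Hastings and Barker orbit kernels associated with this same action (defined below). If $M$ does not have a deterministic 2-cycle on any of its orbits, then $\lim_{i\to\infty} M^i = G$. Moreover, $\lim_{i\to\infty}B^i=G$.
   Context: The Gibbs orbit kernel is $G(x,y)=\pi(y)/\pi(\mathcal{O}(x))$ if $y\in\mathcal{O}(x)$ and $0$ otherwise, where $\pi(\mathcal{O}(x))=\sum_{z\in\mathcal{O}(x)}\pi(z)$. The Metropolis–Hastings orbit kernel is $M(x,y)=\frac{1}{|\mathcal{O}(x)|-1}\min\{1,\pi(y)/\pi(x)\}$ for $y\in\mathcal{O}(x)$, $y\neq x$; $M(x,y)=0$ for $y\notin\mathcal{O}(x)$; and $M(x,x)=1-\sum_{y\ne x}M(x,y)$ (so $M(x,x)=1$ if $|\mathcal{O}(x)|=1$). The Barker orbit kernel $B$ is defined identically with $\min\{1,\pi(y)/\pi(x)\}$ replaced by $\pi(y)/(\pi(x)+\pi(y))$. Each of these kernels is block diagonal with respect to the orbits. ''$M$ has a deterministic 2-cycle on an orbit'' means that the block of $M$ on that orbit equals $\begin{pmatrix}0&1\\1&0\end{pmatrix}$. *)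

(* Defs.v *)
From HB Require Import structures.
From mathcomp Require Import all_boot all_order all_algebra.
From mathcomp Require Import all_classical all_reals all_analysis.
Set Implicit Arguments. Unset Strict Implicit. Unset Printing Implicit Defensive.
Import Order.TTheory GRing.Theory Num.Theory.
Local Open Scope ring_scope.

Definition is_group_action (Gt X : Type) (mul : Gt -> Gt -> Gt) (one : Gt)
  (inv : Gt -> Gt) (act : Gt -> X -> X) : Prop :=
  [/\ (forall a b c, mul a (mul b c) = mul (mul a b) c),
      (forall a, mul one a = a /\ mul a one = a),
      (forall a, mul (inv a) a = one /\ mul a (inv a) = one),
      (forall x, act one x = x) &
      (forall a b x, act (mul a b) x = act a (act b x))].

Definition positive_pmf (R : realType) (X : finType) (pi : X -> R) : Prop :=
  (forall x, 0 < pi x) /\ \sum_(x : X) pi x = 1.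

Definition orbit_of (Gt : Type) (X : finType) (act : Gt -> X -> X) (x : X)
  : {set X} := [set y | `[< exists g, act g x = y >]].

Definition kmul (R : realType) (X : finType) (K L : X -> X -> R) : X -> X -> R :=
  fun x y => \sum_(z : X) K x z * L z y.

Fixpoint kpow (R : realType) (X : finType) (K : X -> X -> R) (n : nat)
  : X -> X -> R :=
  match n with
  | 0%N => fun x y => (x == y)%:R
  | n'.+1 => kmul (kpow K n') K
  end.

Section Kernels.
Variables (R : realType) (X : finType) (Gt : Type) (act : Gt -> X -> X)
  (pi : X -> R).

Local Notation O := (orbit_of act).

Definition gibbs_kernel : X -> X -> R := fun x y =>
  if y \in O x then pi y / (\sum_(z in O x) pi z) else 0.

Definition orbit_prop_kernel (acc : X -> X -> R) : X -> X -> R := fun x y =>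
  if (y \in O x) && (y != x) then (#|O x|.-1)%:R^-1 * acc x y else 0.

Definition orbit_kernel (acc : X -> X -> R) : X -> X -> R := fun x y =>
  if y == x then 1 - \sum_(z | z != x) orbit_prop_kernel acc x z
  else orbit_prop_kernel acc x y.

Definition mh_kernel : X -> X -> R :=
  orbit_kernel (fun x y => Num.min 1 (pi y / pi x)).

Definition barker_kernel : X -> X -> R :=
  orbit_kernel (fun x y => pi y / (pi x + pi y)).

End Kernels.

Definition det_2cycle_on (R : realType) (X : finType) (K : X -> X -> R)
  (O : {set X}) : Prop :=
  #|O| = 2%N /\ (forall y z, y \in O -> z \in O -> K y z = (y != z)%:R).

(* Main.v *)
Require Import Defs.
From HB Require Import structures.
From mathcomp Require Import all_boot all_order all_algebra.
From mathcomp Require Import all_classical all_reals all_analysis.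
From mathcomp Require Import ring lra.
Import Order.TTheory GRing.Theory Num.Theory.
Import numFieldNormedType.Exports.
Local Open Scope classical_set_scope.
Local Open Scope ring_scope.

Section Abstract.
Variables (R : realType) (X : finType).
Implicit Types (K P : X -> X -> R) (O : {set X}).

Lemma kpowS_l K n x y :
  kpow K n.+1 x y = \sum_z K x z * kpow K n z y.
Proof.
elim: n x y => [|n IH] x y.
  rewrite /= /kmul (bigD1 x) //= eqxx mul1r big1 ?addr0; last first.
    by move=> z /negbTE; rewrite eq_sym => ->; rewrite mul0r.
  rewrite (bigD1 y) //= eqxx mulr1 big1 ?addr0 //.
  by move=> z /negbTE; rewrite eq_sym => ->; rewrite mulr0.
change (\sum_w kpow K n.+1 x w * K w y = \sum_z K x z * kpow K n.+1 z y).
under eq_bigr => w _ do rewrite IH big_distrl /=.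
rewrite exchange_big /=; apply: eq_bigr => z _.
by rewrite big_distrr /=; apply: eq_bigr => w _; rewrite mulrA.
Qed.

Lemma sum_restrict K O x (g : X -> R) :
  x \in O -> (forall x z, x \in O -> z \notin O -> K x z = 0) ->
  \sum_z K x z * g z = \sum_(z in O) K x z * g z.
Proof.
move=> xO Kout; rewrite (bigID (fun z => z \in O)) /= [X in _ + X]big1 ?addr0 //.
by move=> z zO; rewrite Kout ?mul0r.
Qed.

Lemma width_step P O e (f : X -> R) m d :
  (forall x z, 0 <= P x z) ->
  (forall x z, x \in O -> z \notin O -> P x z = 0) ->
  (forall x, x \in O -> \sum_z P x z = 1) ->
  (forall x z, x \in O -> z \in O -> e <= P x z) ->
  0 <= d -> (forall z, z \in O -> m <= f z <= m + d) ->
  exists m', forall x, x \in O ->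
    m' <= \sum_z P x z * f z <= m' + (1 - #|O|%:R * e) * d.
Proof.
move=> P0 Pout Psum Pe d0 fb.
have PsumO x : x \in O -> \sum_(z in O) P x z = 1.
  move=> xO; rewrite -(Psum x xO) [RHS](bigID (fun z => z \in O)) /= [X in _ = _ + X]big1 ?addr0 //.
  by move=> z zO; rewrite Pout.
exists (m + e * \sum_(z in O) (f z - m)) => x xO.
have e1 : \sum_z P x z * f z = m + \sum_(z in O) P x z * (f z - m).
  rewrite (sum_restrict P O x f xO Pout).
  have := PsumO x xO.
  move=> S1.
  under [X in _ = _ + X]eq_bigr do rewrite mulrBr.
  rewrite sumrB -big_distrl /= S1 mul1r addrC subrK //.
have e2 : \sum_(z in O) P x z * (f z - m) =
   e * \sum_(z in O) (f z - m) + \sum_(z in O) (P x z - e) * (f z - m).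
  rewrite big_distrr -big_split /=; apply: eq_bigr => z _; ring.
have lo : 0 <= \sum_(z in O) (P x z - e) * (f z - m).
  apply: sumr_ge0 => z zO; apply: mulr_ge0.
    by rewrite subr_ge0 Pe.
  by have /andP[h _] := fb z zO; rewrite subr_ge0.
have hi : \sum_(z in O) (P x z - e) * (f z - m) <= (1 - #|O|%:R * e) * d.
  apply: (@le_trans _ _ (\sum_(z in O) (P x z - e) * d)).
    apply: ler_sum => z zO; apply: ler_wpM2l; first by rewrite subr_ge0 Pe.
    by have /andP[_ h] := fb z zO; rewrite lerBlDl.
  rewrite -big_distrl /= sumrB sumr_const.
  have := PsumO x xO.
  by move=> ->; rewrite mulr_natl.
rewrite e1 e2; apply/andP; split; lra.
Qed.

End Abstract.

Section Iter.
Variables (R : realType) (X : finType).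

Lemma kernel_iter (K : X -> X -> R) (O : {set X}) (y : X) (eps : R) :
  (forall x z, 0 <= K x z) ->
  (forall x z, x \in O -> z \notin O -> K x z = 0) ->
  (forall x, \sum_z K x z = 1) ->
  (forall x z, x \in O -> z \in O -> eps <= \sum_w K x w * K w z) ->
  y \in O ->
  0 <= 1 - #|O|%:R * eps /\
  forall k n, (2 * k <= n)%N -> exists m, forall x, x \in O ->
    m <= kpow K n x y <= m + (1 - #|O|%:R * eps) ^+ k.
Proof.
move=> K0 Kout Ksum Ppos yO.
pose P x z := \sum_w K x w * K w z.
have P0 x z : 0 <= P x z by apply: sumr_ge0 => w _; apply: mulr_ge0.
have Pout x z : x \in O -> z \notin O -> P x z = 0.
  move=> xO zO; apply: big1 => w _.
  by case: (boolP (w \in O)) => wO; [rewrite (Kout w z) ?mulr0 | rewrite Kout ?mul0r].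
have Psum x : \sum_z P x z = 1.
  rewrite /P exchange_big /= -(Ksum x); apply: eq_bigr => w _.
  by rewrite -big_distrr /= Ksum mulr1.
have kP n x : kpow K n.+2 x y = \sum_z P x z * kpow K n z y.
  rewrite kpowS_l; under eq_bigr do rewrite kpowS_l big_distrr /=.
  rewrite exchange_big /=; apply: eq_bigr => z _.
  by rewrite /P big_distrl /=; apply: eq_bigr => w _; rewrite mulrA.
have rho0 : 0 <= 1 - #|O|%:R * eps.
  rewrite subr_ge0 -[X in _ <= X](Psum y) (bigID (fun z => z \in O)) /=.
  rewrite [X in _ <= _ + X]big1 ?addr0; last by move=> z zO; rewrite Pout.
  apply: (@le_trans _ _ (\sum_(z in O) eps)); first by rewrite sumr_const -[eps *+ _]mulr_natl.
  by apply: ler_sum => z zO; rewrite Ppos.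
split => //.
elim=> [|k IH] n.
  move=> _; rewrite expr0.
  elim: n => [|n IHn].
    exists 0 => x _; rewrite /= add0r.
    by case: (x == y); rewrite ?mulr1n ?mulr0n ?lexx ?ler01.
  have [m hm] := IHn.
  have := @width_step _ _ K O 0 (fun z => kpow K n z y) m 1 K0 Kout (fun x _ => Ksum x) (fun x z _ _ => K0 x z) ler01 hm.
  rewrite mulr0 subr0 mul1r => -[m' hm']; exists m' => x xO.
  by rewrite kpowS_l; apply: hm'.
case: n => [|[|n]]; rewrite ?mulnS // ?addSn ?ltnS ?addSn ?ltnS => hn.
have [m hm] := IH n hn.
have := @width_step _ _ P O eps (fun z => kpow K n z y) m _ P0 Pout (fun x _ => Psum x) Ppos (exprn_ge0 k rho0) hm.
move=> [m' hm']; exists m' => x xO; rewrite kP exprS; exact: hm'.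
Qed.

End Iter.

Section Conv.
Variables (R : realType) (X : finType).

Lemma mean_bound (O : {set X}) (w f : X -> R) c m d y :
  y \in O -> (forall x, x \in O -> 0 < w x) ->
  (forall x, x \in O -> m <= f x <= m + d) ->
  \sum_(x in O) w x * (f x - c) = 0 ->
  forall x, x \in O -> `|c - f x| <= d.
Proof.
move=> yO w0 fb hs.
have hc1 : m <= c.
  rewrite leNgt; apply/negP => hlt.
  move: hs; rewrite (bigD1 y) //=.
  have a : 0 < w y * (f y - c).
    apply: mulr_gt0; first exact: w0.
    by have /andP[h _] := fb y yO; rewrite subr_gt0; apply: lt_le_trans h.
  have b : 0 <= \sum_(x in O | x != y) w x * (f x - c).
    apply: sumr_ge0 => x /andP[xO _]; apply: mulr_ge0; first exact: ltW (w0 x xO).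
    by have /andP[h _] := fb x xO; rewrite subr_ge0; apply: le_trans (ltW hlt) h.
  lra.
have hc2 : c <= m + d.
  rewrite leNgt; apply/negP => hlt.
  move: hs; rewrite (bigD1 y) //=.
  have a : w y * (f y - c) < 0.
    rewrite pmulr_rlt0; last exact: w0.
    by have /andP[_ h] := fb y yO; rewrite subr_lt0; apply: le_lt_trans h hlt.
  have b : \sum_(x in O | x != y) w x * (f x - c) <= 0.
    apply: sumr_le0 => x /andP[xO _]; apply: mulr_ge0_le0; first exact: ltW (w0 x xO).
    by have /andP[_ h] := fb x xO; rewrite subr_le0; apply: le_trans h (ltW hlt).
  lra.
move=> x xO; have /andP[h1 h2] := fb x xO.
rewrite ler_norml; apply/andP; split; lra.
Qed.

Lemma conv_block (K : X -> X -> R) (O : {set X}) (y : X) (eps : R) (w : X -> R) c :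
  (forall x z, 0 <= K x z) ->
  (forall x z, x \in O -> z \notin O -> K x z = 0) ->
  (forall x, \sum_z K x z = 1) ->
  (forall x z, x \in O -> z \in O -> eps <= \sum_w K x w * K w z) ->
  y \in O -> 0 < eps ->
  (forall x, x \in O -> 0 < w x) ->
  (forall n, \sum_(x in O) w x * (kpow K n x y - c) = 0) ->
  forall x, x \in O -> (fun n => kpow K n x y) @ \oo --> c.
Proof.
move=> K0 Kout Ksum Ppos yO eps0 w0 hs x xO.
have [rho0 H] := @kernel_iter _ _ K O y eps K0 Kout Ksum Ppos yO.
set rho := 1 - _ in rho0 H.
have rho1 : `|rho| < 1.
  rewrite ger0_norm // /rho; rewrite ltrBlDr ltrDl.
  apply: mulr_gt0 => //; rewrite ltr0n; apply/card_gt0P; by exists y.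
have bnd k n : (2 * k <= n)%N -> `|c - kpow K n x y| <= rho ^+ k.
  move=> hn; have [m hm] := H k n hn.
  exact: (@mean_bound O w (fun z => kpow K n z y) c m _ y yO w0 hm (hs n) x xO).
apply/cvgrPdist_le => e e0.
have := cvg_expr rho1.
move=> /cvgrPdist_lt /(_ e e0) [N _ HN].
exists (2 * N)%N => // n /= hn.
apply: le_trans (bnd N n hn) _.
have := HN N (leqnn N); rewrite /= sub0r normrN ger0_norm ?exprn_ge0 //.
exact: ltW.
Qed.

End Conv.

Section Concrete.
Set Implicit Arguments.
Variables (R : realType) (X : finType) (Gt : Type) (mul : Gt -> Gt -> Gt)
  (one : Gt) (inv : Gt -> Gt) (act : Gt -> X -> X) (pi : X -> R).
Hypothesis hG : is_group_action mul one inv act.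
Hypothesis pi0 : forall x, 0 < pi x.
Local Notation O := (orbit_of act).

Lemma orbit_refl x : x \in O x.
Proof. case: hG => _ _ _ h1 _; rewrite inE asboolE; exists one; apply: h1. Qed.

Lemma orbit_sym x y : y \in O x -> x \in O y.
Proof.
case: hG => _ _ hI h1 hM; rewrite !inE ?asboolE => -[g hg].
exists (inv g); rewrite -hg -hM; case: (hI g) => -> _; exact: h1.
Qed.

Lemma orbit_trans x y z : y \in O x -> z \in O y -> z \in O x.
Proof.
case: hG => _ _ _ _ hM; rewrite !inE ?asboolE => -[g <-] [h <-].
by exists (mul h g); rewrite hM.
Qed.

Lemma orbit_eq x y : y \in O x -> O y = O x.
Proof.
move=> yx; apply/setP => z; apply/idP/idP => hz.
  exact: orbit_trans yx hz.
exact: orbit_trans (orbit_sym yx) hz.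
Qed.

Variable acc : X -> X -> R.
Hypothesis acc0 : forall x z, 0 < acc x z.
Hypothesis acc1 : forall x z, acc x z <= 1.
Hypothesis accDB : forall x z, pi x * acc x z = pi z * acc z x.
Local Notation K := (orbit_kernel act acc).

Lemma prop_sum x : \sum_(z | z != x) orbit_prop_kernel act acc x z =
  (#|O x|.-1)%:R^-1 * \sum_(z in O x :\ x) acc x z.
Proof.
rewrite big_distrr [RHS]big_mkcond [LHS]big_mkcond /=; apply: eq_bigr => z _.
rewrite /orbit_prop_kernel in_setD1.
by case: (z \in O x); case: (z != x).
Qed.

Lemma card_D1 x : #|O x :\ x| = #|O x|.-1.
Proof. by rewrite (cardsD1 x (O x)) orbit_refl. Qed.

Lemma prop_sum_le1 x : \sum_(z | z != x) orbit_prop_kernel act acc x z <= 1.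
Proof.
rewrite prop_sum -card_D1.
have hS : \sum_(z in O x :\ x) acc x z <= #|O x :\ x|%:R.
  rewrite -sum1_card natr_sum; apply: ler_sum => z _; exact: acc1.
case: (posnP #|O x :\ x|) => [->|hn]; first by rewrite invr0 mul0r ler01.
by rewrite ler_pdivrMl ?ltr0n // mulr1.
Qed.

Lemma K_ge0 x z : 0 <= K x z.
Proof.
rewrite /orbit_kernel; case: eqP => _; first by rewrite subr_ge0 prop_sum_le1.
rewrite /orbit_prop_kernel; case: ifP => _ //.
by apply: mulr_ge0; [rewrite invr_ge0 ler0n | exact: ltW].
Qed.

Lemma K_out x z : z \notin O x -> K x z = 0.
Proof.
move=> zO; have zx : z != x by apply: contraNneq zO => ->; exact: orbit_refl.
by rewrite /orbit_kernel (negbTE zx) /orbit_prop_kernel (negbTE zO).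
Qed.

Lemma K_sum x : \sum_z K x z = 1.
Proof.
rewrite (bigD1 x) //= {1}/orbit_kernel eqxx.
rewrite [X in _ + X](eq_bigr (fun z => orbit_prop_kernel act acc x z)).
  by rewrite subrK.
by move=> z zx; rewrite /orbit_kernel (negbTE zx).
Qed.

Lemma K_DB x z : pi x * K x z = pi z * K z x.
Proof.
case: (eqVneq z x) => [->//|zx].
rewrite /orbit_kernel (negbTE zx) eq_sym (negbTE zx) /orbit_prop_kernel.
have xz : x != z by rewrite eq_sym.
rewrite zx xz !andbT.
case: (boolP (z \in O x)) => zO /=.
  rewrite (orbit_sym zO) (orbit_eq zO) /=.
  by rewrite mulrCA accDB mulrCA.
have -> : (x \in O z) = false.
  by apply/negbTE; apply: contra zO; exact: orbit_sym.
by rewrite !mulr0.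
Qed.

Lemma K_pos x z : z \in O x -> z != x -> 0 < K x z.
Proof.
move=> zO zx; rewrite /orbit_kernel (negbTE zx) /orbit_prop_kernel zO zx /=.
apply: mulr_gt0 => //; rewrite invr_gt0 ltr0n -card_D1.
by apply/card_gt0P; exists z; rewrite in_setD1 zx zO.
Qed.

Lemma K_diag x : K x x = 1 - (#|O x|.-1)%:R^-1 * \sum_(z in O x :\ x) acc x z.
Proof. by rewrite /orbit_kernel eqxx prop_sum. Qed.


Lemma eq_sym_neq (T : eqType) (a b : T) : a != b -> b != a.
Proof. by rewrite eq_sym. Qed.

Lemma kpow_out n x y : y \notin O x -> kpow K n x y = 0.
Proof.
elim: n x y => [|n IH] x y yx.
  rewrite /=; case: eqP => // exy; exfalso; move: yx; rewrite exy orbit_refl //.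
change (\sum_z kpow K n x z * K z y = 0).
apply: big1 => z _; case: (boolP (z \in O x)) => zO.
  rewrite K_out ?mulr0 //; apply: contra yx => yz; exact: orbit_trans zO yz.
by rewrite IH // mul0r.
Qed.

Lemma stationary n y : \sum_x pi x * kpow K n x y = pi y.
Proof.
elim: n y => [|n IH] y.
  rewrite (bigD1 y) //= eqxx mulr1 big1 ?addr0 // => x /negbTE ->; exact: mulr0.
change (\sum_x pi x * (\sum_z kpow K n x z * K z y) = pi y).
under eq_bigr do rewrite big_distrr /=.
rewrite exchange_big /=.
transitivity (\sum_z (\sum_x pi x * kpow K n x z) * K z y).
  by apply: eq_bigr => z _; rewrite big_distrl; apply: eq_bigr => x _; rewrite mulrA.
under eq_bigr do rewrite IH K_DB.
by rewrite -big_distrr /= K_sum mulr1.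
Qed.

Lemma P_pos y x z :
  (forall x, ~ det_2cycle_on K (O x)) ->
  x \in O y -> z \in O y -> 0 < \sum_w K x w * K w z.
Proof.
move=> nd xy zy.
have Oxy : O x = O y by apply: orbit_eq.
have zx' : z \in O x by rewrite Oxy.
have term w : K x w * K w z <= \sum_w K x w * K w z.
  rewrite (bigD1 w) //= lerDl; apply: sumr_ge0 => v _; apply: mulr_ge0; exact: K_ge0.
case: (eqVneq x z) => [exz|xz].
  subst z.
  case: (set_0Vmem (O x :\ x)) => [h0|[w wO]].
    apply: (lt_le_trans _ (term x)); rewrite K_diag h0 big_set0 mulr0 subr0 mulr1 //.
  move: wO; rewrite in_setD1 => /andP[wx wO].
  apply: (lt_le_trans _ (term w)); apply: mulr_gt0; first exact: K_pos.
  apply: K_pos; [exact: orbit_sym | by rewrite eq_sym].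
case: (set_0Vmem (O x :\: [set x; z]%SET)) => [h0|[w wO]]; last first.
  move: wO; rewrite finset.in_setD in_set2 negb_or => /andP[/andP[wx wz] wO].
  apply: (lt_le_trans _ (term w)); apply: mulr_gt0; first exact: K_pos.
  apply: K_pos; [exact: orbit_trans (orbit_sym wO) zx' | by rewrite eq_sym].
have Oxz : O x = [set x; z]%SET.
  apply/setP => v; have := congr1 (fun A : {set X} => v \in A) h0.
  rewrite /= finset.in_setD finset.in_set0 in_set2 => h.
  apply/idP/idP => [vO|]; first by move: h; rewrite vO andbT => /negbFE.
  by case/orP => /eqP ->; [exact: orbit_refl | exact: zx'].
have Ozx : O z = O x by apply: orbit_eq.
have out v : v != x -> v != z -> v \notin O x by move=> h1 h2; rewrite Oxz !inE negb_or h1 h2.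
have sum2 a b : a \in O x -> b \in O x -> a != b -> K a a + K a b = 1.
  move=> aO bO ab; rewrite -(K_sum a) (bigD1 a) //= (bigD1 b) //=; last by rewrite eq_sym.
  rewrite big1 ?addr0 // => v /andP[va vb]; apply: K_out.
  rewrite (orbit_eq aO) Oxz in_set2 negb_or.
  move: aO bO ab va vb; rewrite Oxz !in_set2 => /orP[]/eqP -> /orP[]/eqP ->;
    rewrite ?eqxx //= => _ va vb; by rewrite ?va ?vb.
have hd : 0 < K x x + K z z.
  rewrite lt_def; apply/andP; split; last by apply: addr_ge0; exact: K_ge0.
  apply/negP => /eqP h.
  have kxx : K x x = 0 by have := K_ge0 x x; have := K_ge0 z z; lra.
  have kzz : K z z = 0 by have := K_ge0 x x; have := K_ge0 z z; lra.
  have kxz : K x z = 1 by have := sum2 x z (orbit_refl x) zx' xz; lra.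
  have kzx : K z x = 1 by have := sum2 z x zx' (orbit_refl x) (@eq_sym_neq _ _ _ xz) ; lra.
  apply: (nd y); split; first by rewrite -Oxy Oxz cards2 xz.
  move=> a b; rewrite -Oxy Oxz !inE => /orP[] /eqP -> /orP[] /eqP ->;
    by rewrite ?eqxx ?kxx ?kzz ?kxz ?kzx ?xz // eq_sym xz.
have hle : K x x * K x z + K x z * K z z <= \sum_w K x w * K w z.
  rewrite (bigD1 x) //= (bigD1 z) //=; last by rewrite eq_sym.
  rewrite addrA lerDl; apply: sumr_ge0 => v _; apply: mulr_ge0; exact: K_ge0.
apply: lt_le_trans hle.
have -> : K x x * K x z + K x z * K z z = K x z * (K x x + K z z) by ring.
apply: mulr_gt0 => //; apply: K_pos => //; by rewrite eq_sym.
Qed.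


Lemma main_conv : (forall x, ~ det_2cycle_on K (O x)) ->
  forall x y, (fun i : nat => kpow K i x y) @ \oo --> gibbs_kernel act pi x y.
Proof.
move=> nd x y.
case: (boolP (y \in O x)) => yx; last first.
  rewrite /gibbs_kernel (negbTE yx).
  have -> : (fun i => kpow K i x y) = fun=> 0.
    by apply/funext => i; exact: kpow_out.
  exact: cvg_cst.
have xy := orbit_sym yx.
have Oe := orbit_eq yx.
rewrite /gibbs_kernel yx -Oe.
set Z := \sum_(z in O y) pi z.
have Z0 : 0 < Z.
  rewrite /Z (bigD1 y) ?orbit_refl //=.
  have := pi0 y; have : 0 <= \sum_(i in O y | i != y) pi i.
    by apply: sumr_ge0 => i _; exact: ltW.
  lra.
pose eps := \big[Order.min/1]_(p : X * X | (p.1 \in O y) && (p.2 \in O y))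
   (\sum_w K p.1 w * K w p.2).
have eps0 : 0 < eps.
  apply: (big_ind (fun v => 0 < v)); first exact: ltr01.
    by move=> a b ha hb; rewrite lt_min ha hb.
  by move=> [a b] /andP[ha hb]; exact: (@P_pos y a b nd ha hb).
have epsle a b : a \in O y -> b \in O y -> eps <= \sum_w K a w * K w b.
  move=> ha hb; rewrite /eps (bigD1 (a, b)) /=; last by rewrite ha hb.
  by rewrite ge_min lexx.
have Kout a b : a \in O y -> b \notin O y -> K a b = 0.
  by move=> ha hb; apply: K_out; rewrite (orbit_eq ha).
have hs n : \sum_(x in O y) pi x * (kpow K n x y - pi y / Z) = 0.
  under eq_bigr do rewrite mulrBr.
  rewrite sumrB -big_distrl /= -/Z.
  have -> : \sum_(x in O y) pi x * kpow K n x y = pi y.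
    rewrite -(stationary n y) [RHS](bigID (fun x => x \in O y)) /=.
    rewrite [X in _ = _ + X]big1 ?addr0 // => v vO.
    by rewrite kpow_out ?mulr0 //; apply: contra vO; exact: orbit_sym.
  by rewrite mulrCA divff ?mulr1 ?subrr // lt0r_neq0.
exact: (@conv_block _ _ K (O y) y eps pi (pi y / Z) K_ge0 Kout K_sum epsle
  (orbit_refl y) eps0 (fun x _ => pi0 x) hs x xy).
Qed.

Lemma barker_nd : (forall x z, acc x z < 1) -> forall x, ~ det_2cycle_on K (O x).
Proof.
move=> acc1' x [c2 h].
have := h x x (orbit_refl x) (orbit_refl x); rewrite eqxx K_diag c2 /=.
have : #|O x :\ x| == 1%N by rewrite card_D1 c2.
move=> /cards1P[w ->]; rewrite big_set1 invr1 mul1r.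
have := acc1' x w; lra.
Qed.

End Concrete.

Theorem proposition2p3 (R : realType) (X : finType) (Gt : Type)
  (mul : Gt -> Gt -> Gt) (one : Gt) (inv : Gt -> Gt) (act : Gt -> X -> X)
  (pi : X -> R) :
  is_group_action mul one inv act ->
  positive_pmf pi ->
  ((forall x : X, ~ det_2cycle_on (mh_kernel act pi) (orbit_of act x)) ->
     forall x y : X,
       (fun i : nat => kpow (mh_kernel act pi) i x y) @ \oo
         --> gibbs_kernel act pi x y)
  /\ (forall x y : X,
       (fun i : nat => kpow (barker_kernel act pi) i x y) @ \oo
         --> gibbs_kernel act pi x y).
Proof.
move=> hG [pi0 _]; split.
  apply: (@main_conv _ _ _ _ _ _ _ pi hG pi0 (fun x y => Num.min 1 (pi y / pi x))).
  - by move=> a b; rewrite lt_min ltr01 divr_gt0.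
  - by move=> a b; rewrite ge_min lexx.
  - move=> a b; have pa := pi0 a; have pb := pi0 b.
    case: (leP (pi b) (pi a)) => hab.
      rewrite (min_r (_ : pi b / pi a <= 1)) ?ler_pdivrMr ?mul1r //.
      rewrite (min_l (_ : 1 <= pi a / pi b)) ?ler_pdivlMr ?mul1r //.
      by rewrite mulrC divfK ?mulr1 // lt0r_neq0.
    rewrite (min_l (_ : 1 <= pi b / pi a)) ?ler_pdivlMr ?mul1r ?ltW //.
    rewrite (min_r (_ : pi a / pi b <= 1)) ?ler_pdivrMr ?mul1r ?ltW //.
    by rewrite mulr1 mulrC divfK // lt0r_neq0.
have acc0 a b : 0 < pi b / (pi a + pi b) by rewrite divr_gt0 ?addr_gt0.
have acc1 a b : pi b / (pi a + pi b) < 1.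
  by rewrite ltr_pdivrMr ?addr_gt0 // mul1r ltrDr.
have accDB a b : pi a * (pi b / (pi a + pi b)) = pi b * (pi a / (pi b + pi a)).
  by rewrite addrC mulrCA.
exact: (@main_conv _ _ _ _ _ _ _ pi hG pi0 (fun a b => pi b / (pi a + pi b)) acc0
  (fun a b => ltW (acc1 a b)) accDB (barker_nd hG acc1)).
Qed.
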